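(* Let $n=2^m$ with $m\ge 4$ and let $\mathcal{Q}$ be the Steiner quadruple system of the extended Hamming code of length $n$. Then the set $C=\{x\subset\{1,\dots,n\}: |x|=6,\ \text{no block of }\mathcal{Q}\text{ is a subset of }x\}$ is a completely regular code in the Johnson graph $J(n,6)$ with covering radius $2$. Its distance partition is $(C^0,C^1,C^2)$, where $C^j$ is the set of $6$-subsets containing exactly $0$, $1$, $3$ blocks of $\mathcal{Q}$ for $j=0,1,2$ respectively; there are no edges between $C^0$ and $C^2$, and each vertex of $C^1$ is adjacent to exactly $6$ vertices of $C^2$.
   Context: The Johnson graph $J(n,k)$ has as vertices the $k$-element subsets of $\{1,\dots,n\}$, two being adjacent iff they meet in $k-1$ elements. The extended binary Hamming code of length $n=2^m$ is obtained by adding an overall parity bit to the binary Hamming code of length $2^m-1$; its Steiner quadruple system $\mathcal{Q}$ is the set of supports of its weight-$4$ codewords (a $3$-$(n,4,1)$ design). For a nonempty vertex set $C$ of a connected regular graph, $C_i$ is the set of vertices at distance exactly $i$ from $C$, the covering radius is the largest $i$ with $C_i\neq\emptyset$, and $C$ is completely regular if there are numbers $\gamma_i,\alpha_i,\beta_i$ such that every vertex of $C_i$ has exactly $\gamma_i$ neighbours in $C_{i-1}$, $\alpha_i$ in $C_i$, $\beta_i$ in $C_{i+1}$, for all $i$. *)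

(* Defs.v *)
From mathcomp Require Import all_boot.
Set Implicit Arguments. Unset Strict Implicit. Unset Printing Implicit Defensive.

Section Graph.
Variables (V : finType) (e : rel V).

Fixpoint reach (C : {set V}) (d : nat) : {set V} :=
  if d is d'.+1 then [set w | [exists v in reach C d', e v w]] else C.

Definition layer (C : {set V}) (i : nat) : {set V} :=
  reach C i :\: \bigcup_(j < i) reach C j.

Definition prev_layer (C : {set V}) (i : nat) : {set V} :=
  if i is i'.+1 then layer C i' else set0.

Definition nbrs_in (v : V) (A : {set V}) : nat := #|[set w in A | e v w]|.

Definition covering_radius (C : {set V}) (r : nat) : Prop :=
  layer C r != set0 /\ forall i, r < i -> layer C i = set0.

Definition completely_regular (C : {set V}) : Prop :=
  C != set0 /\
  exists gamma alpha beta : nat -> nat, forall i v, v \in layer C i ->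
    [/\ nbrs_in v (prev_layer C i) = gamma i,
        nbrs_in v (layer C i) = alpha i &
        nbrs_in v (layer C i.+1) = beta i].
End Graph.

Definition johnson_vertex (n k : nat) := {x : {set 'I_n} | #|x| == k}.

Definition johnson_adj (n k : nat) : rel (johnson_vertex n k) :=
  fun x y => #|val x :&: val y| == k.-1.

(* ---------- Extended binary Hamming code of length 2^m ----------
   Words of length 2^m are identified with their supports S.
   Coordinates i < 2^m - 1 are those of the Hamming code of length 2^m - 1,
   whose parity-check matrix has as i-th column the binary expansion of i+1
   (bit k of i+1 is odd ((i+1) %/ 2^k)); coordinate 2^m - 1 is the added
   overall parity bit. *)
Definition hamming_syndrome_zero (m : nat) (S : {set 'I_(2 ^ m)}) : bool :=
  [forall k : 'I_m,
     ~~ odd #|[set i in S | (i < 2 ^ m - 1) && odd ((i + 1) %/ 2 ^ k)]|].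

Definition parity_bit_ok (m : nat) (S : {set 'I_(2 ^ m)}) : bool :=
  [exists j in S, val j == 2 ^ m - 1]
    == odd #|[set i in S | i < 2 ^ m - 1]|.

Definition ext_hamming_codeword (m : nat) (S : {set 'I_(2 ^ m)}) : bool :=
  hamming_syndrome_zero S && parity_bit_ok S.

Definition hamming_SQS (m : nat) : {set {set 'I_(2 ^ m)}} :=
  [set B : {set 'I_(2 ^ m)} | (#|B| == 4) && ext_hamming_codeword B].

Definition nblocks (m : nat) (x : {set 'I_(2 ^ m)}) : nat :=
  #|[set B in hamming_SQS m | B \subset x]|.

Arguments johnson_adj : clear implicits.

(* Main.v *)
Require Import Defs.
From mathcomp Require Import all_boot.
From mathcomp Require Import ssralg zmodp zify.
Set Implicit Arguments. Unset Strict Implicit. Unset Printing Implicit Defensive.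
Import GRing.Theory.

Section Core.
Variables (T : finType) (G : zmodType) (f : T -> G) (h : G -> T).
Hypotheses (fK : cancel f h) (hK : cancel h f) (char2 : forall g : G, (g + g = 0)%R).

Lemma finj : injective f. Proof. exact: can_inj fK. Qed.

Lemma oppE (g : G) : (- g = g)%R.
Proof. by apply/eqP; rewrite eq_sym -addr_eq0 char2. Qed.

Lemma add0E (a b : G) : (a + b = 0)%R -> a = b.
Proof. by move/eqP; rewrite addr_eq0 oppE => /eqP. Qed.

Lemma addKE (a b : G) : (a + (a + b) = b)%R.
Proof. by rewrite addrA char2 add0r. Qed.

Definition sm (A : {set T}) : G := (\sum_(i in A) f i)%R.
Definition blk (B : {set T}) := (#|B| == 4) && (sm B == 0%R).
Definition nb (A : {set T}) := #|[set B : {set T} | blk B && (B \subset A)]|.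
Definition ps (A : {set T}) := [set P : {set T} | P \subset A & #|P| == 2].
Definition pc (A : {set T}) (w : G) := #|[set P in ps A | sm P == w]|.

Lemma sm0 : sm set0 = 0%R. Proof. by rewrite /sm big_set0. Qed.
Lemma sm1 x : sm [set x] = f x. Proof. by rewrite /sm big_set1. Qed.
Lemma smU (A B : {set T}) : [disjoint A & B] -> sm (A :|: B) = (sm A + sm B)%R.
Proof.
move=> dAB; rewrite /sm -bigU //; apply: eq_bigl => i; by rewrite !inE.
Qed.
Lemma smU1 x (A : {set T}) : x \notin A -> sm (x |: A) = (f x + sm A)%R.
Proof. by move=> xA; rewrite smU ?sm1 // disjoints1. Qed.
Lemma sm2 x y : x != y -> sm [set x; y] = (f x + f y)%R.
Proof. by move=> xy; rewrite smU1 ?sm1 // inE. Qed.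
Lemma smD (A B : {set T}) : B \subset A -> sm (A :\: B) = (sm A + sm B)%R.
Proof.
move=> BA; have -> : sm A = (sm B + sm (A :\: B))%R.
  rewrite -smU; first by rewrite -{1}(setID A B) (setIidPr BA).
  by rewrite disjoints_subset setCD subsetUr.
by rewrite addrC addrA char2 add0r.
Qed.

Lemma setDDK (y B : {set T}) : B \subset y -> y :\: (y :\: B) = B.
Proof. by move=> By; rewrite setDDr setDv set0U (setIidPr By). Qed.

Lemma cardsDs (y B : {set T}) : B \subset y -> #|y :\: B| = #|y| - #|B|.
Proof. by move=> By; rewrite cardsD (setIidPr By). Qed.

Lemma nbE (y : {set T}) : #|y| = 6 -> nb y = pc y (sm y).
Proof.
move=> cy; rewrite /nb /pc.
set D := [set B : {set T} | blk B && (B \subset y)].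
have inj : {in D &, injective (fun B => y :\: B)}.
  move=> B1 B2; rewrite !inE => /andP[_ s1] /andP[_ s2] e.
  by rewrite -(setDDK s1) -(setDDK s2) e.
rewrite -(card_in_imset inj); apply: eq_card => P; rewrite !inE.
apply/imsetP/idP.
- case=> B; rewrite inE /blk => /andP[/andP[cB sB] By] ->.
  by rewrite subsetDl cardsDs // cy (eqP cB) smD // (eqP sB) addr0 !eqxx.
- case/andP=> /andP[Py cP] sP; exists (y :\: P); last by rewrite setDDK.
  rewrite inE /blk subsetDl cardsDs // cy (eqP cP) /= andbT smD //.
  by rewrite (eqP sP) char2.
Qed.

Lemma pair_with (P : {set T}) b : #|P| = 2 -> b \in P ->
  exists2 u, u != b & P = [set b; u].
Proof.
move/eqP/cards2P=> [x [y [xy ->]]]; rewrite !inE => /orP[]/eqP->.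
  by exists y; rewrite // eq_sym.
by exists x => //; rewrite setUC.
Qed.

Lemma pcU1 (S : {set T}) b w : b \notin S ->
  pc (b |: S) w = pc S w + (h (w + f b)%R \in S).
Proof.
move=> bS; rewrite /pc -(cardsID [set P : {set T} | b \in P]) addnC.
set c := h (w + f b)%R.
have fc : f c = (w + f b)%R by rewrite /c hK.
congr (_ + _).
  apply: eq_card => P; rewrite !inE.
  apply/idP/idP => [/and3P[bP /andP[PS cP] sP]|/andP[/andP[PS cP] sP]].
    rewrite cP sP !andbT; apply/subsetP => x xP.
    have := subsetP PS x xP; rewrite !inE => /orP[/eqP xb|] //.
    by rewrite -xb xP in bP.
  apply/and3P; split => //; first by apply: contra bS; apply: (subsetP PS).
  by rewrite cP (subset_trans PS) ?subsetUr.
case cS: (c \in S).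
  rewrite /= -(cards1 [set b; c]); apply: eq_card => P; rewrite !inE.
  apply/idP/idP.
    case/andP=> /andP[/andP[PS cP] sP] bP.
    have [u ub eP] := pair_with (eqP cP) bP.
    have bu : b != u by rewrite eq_sym.
    rewrite eP sm2 // in sP.
    have : f u = f c by rewrite fc -(eqP sP) addrC addKE.
    by move/finj => <-; rewrite eP.
  move/eqP=> ->.
  have cb : b != c by apply: contraNneq bS => ->.
  rewrite sm2 // fc addrC -addrA char2 addr0 eqxx !inE eqxx cards2 cb /= !andbT.
  by apply/subsetP => x; rewrite !inE => /orP[]/eqP->; rewrite ?eqxx ?cS ?orbT.
apply: eq_card0 => P; rewrite !inE.
apply/negP; case/andP=> /andP[/andP[PS cP] sP] bP.
have [u ub eP] := pair_with (eqP cP) bP.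
have bu : b != u by rewrite eq_sym.
rewrite eP sm2 // in sP.
have : f u = f c by rewrite fc -(eqP sP) addrC addKE.
move/finj => uc; move: PS; rewrite eP => /subsetP/(_ u).
rewrite !inE eqxx orbT (negbTE ub) uc cS => /(_ isT) //.
Qed.

Lemma nbU1 (S : {set T}) b : #|S| = 5 -> b \notin S ->
  nb (b |: S) = (h (sm S) \in S) + pc S (sm S + f b)%R.
Proof.
move=> cS bS; rewrite nbE; last by rewrite cardsU1 bS cS.
rewrite smU1 // pcU1 // addnC (addrC (f b) (sm S)) -addrA char2 addr0.
by [].
Qed.

Lemma pc_disj (P Q : {set T}) : #|P| = 2 -> #|Q| = 2 -> sm P = sm Q ->
  P != Q -> [disjoint P & Q].
Proof.
move=> cP cQ sPQ nPQ; rewrite -setI_eq0; apply/eqP/setP => x; rewrite !inE.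
apply/negbTE/negP => /andP[xP xQ].
have [u ux eP] := pair_with cP xP; have [v vx eQ] := pair_with cQ xQ.
move: sPQ; rewrite eP eQ !sm2 1?eq_sym // => /addrI/finj uv.
by move: nPQ; rewrite eP eQ uv eqxx.
Qed.

Lemma rest1 (A Q : {set T}) : Q \subset A -> #|A| = #|Q| + 1 ->
  exists2 t, t \in A :\: Q & sm A = (f t + sm Q)%R.
Proof.
move=> QA cA; have : #|A :\: Q| == 1 by rewrite cardsDs // cA addnC addnK.
case/cards1P=> t et; exists t; first by rewrite et set11.
by have := smD QA; rewrite et sm1 => ->; rewrite -addrA char2 addr0.
Qed.

Lemma rest2 (A Q : {set T}) : Q \subset A -> #|A| = #|Q| + 2 ->
  exists r1 r2, [/\ r1 != r2, r1 \in A :\: Q, r2 \in A :\: Q &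
     sm A = (f r1 + f r2 + sm Q)%R].
Proof.
move=> QA cA; have : #|A :\: Q| == 2 by rewrite cardsDs // cA addnC addnK.
case/cards2P=> r1 [r2 [r12 et]]; exists r1, r2; split => //.
- by rewrite et !inE eqxx.
- by rewrite et !inE eqxx orbT.
by have := smD QA; rewrite et sm2 // => ->; rewrite -addrA char2 addr0.
Qed.

Lemma f2neq (u v : T) : u != v -> (f u + f v != 0)%R.
Proof. by apply: contra => /eqP/add0E/finj/eqP. Qed.

Lemma eq3 (a b c : G) : a = (b + (a + c))%R -> b = c.
Proof.
move=> e; have := congr1 (+%R a) e; rewrite char2 addrCA addKE.
by move/esym/add0E.
Qed.

Lemma hsum (x y : G) z : (y == x + f z)%R = (h (x + y)%R == z).
Proof.
apply/eqP/eqP => [->|<-]; first by rewrite addKE fK.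
by rewrite hK addKE.
Qed.

Lemma ps_card (A P : {set T}) : P \in ps A -> #|P| = 2.
Proof. by rewrite inE => /andP[_ /eqP]. Qed.
Lemma ps_sub (A P : {set T}) : P \in ps A -> P \subset A.
Proof. by rewrite inE => /andP[]. Qed.

Section C0.
Variable S : {set T}.
Hypotheses (cS : #|S| = 5) (nS : h (sm S) \notin S).

Lemma C0inj (P Q : {set T}) : P \in ps S -> Q \in ps S -> sm P = sm Q -> P = Q.
Proof.
move=> pP pQ e; apply/eqP; apply: contraT => nPQ.
have dj := pc_disj (ps_card pP) (ps_card pQ) e nPQ.
have sPQ : P :|: Q \subset S by rewrite subUset (ps_sub pP) (ps_sub pQ).
have cPQ : #|P :|: Q| = 4.
  by rewrite cardsU (disjoint_setI0 dj) cards0 (ps_card pP) (ps_card pQ).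
have [t tS st] := rest1 sPQ (etrans cS (congr1 (addn^~ 1) (esym cPQ))).
move: st; rewrite smU // e char2 addr0 => st.
by move: nS; rewrite st fK; move: tS; rewrite inE => /andP[_ ->].
Qed.

Lemma C0out (P : {set T}) : P \in ps S -> h (sm S + sm P)%R \notin S.
Proof.
move=> pP; apply/negP => sS.
set s := h _ in sS; have fs : f s = (sm S + sm P)%R by rewrite /s hK.
case sP: (s \in P).
  have [v vs eP] := pair_with (ps_card pP) sP.
  move: fs; rewrite eP sm2 1?eq_sym // => /eq3 e.
  move: nS; rewrite e fK; apply/negP/negPn.
  by apply: (subsetP (ps_sub pP)); rewrite eP !inE eqxx orbT.
have sub : s |: P \subset S by rewrite subUset sub1set sS (ps_sub pP).
have c3 : #|S| = #|s |: P| + 2 by rewrite cardsU1 sP (ps_card pP) cS.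
have [r1 [r2 [r12 _ _ e]]] := rest2 sub c3.
move: e; rewrite smU1 ?sP // fs -[(sm S + sm P + sm P)%R]addrA char2 addr0.
rewrite -{1}(add0r (sm S)) => /addIr/esym/eqP.
by apply/negP; exact: f2neq r12.
Qed.

Lemma C0le1 b : pc S (sm S + f b)%R <= 1.
Proof.
apply/card_le1_eqP => P Q; rewrite inE => /andP[pP eP]; rewrite inE => /andP[pQ eQ].
by apply: C0inj => //; rewrite (eqP eP) (eqP eQ).
Qed.

Lemma C0cnt : #|[set b | (b \notin S) && (pc S (sm S + f b)%R == 1)]| = 10.
Proof.
pose F := fun P => h (sm S + sm P)%R.
have injF : {in ps S &, injective F}.
  move=> P Q pP pQ /(congr1 f); rewrite /F !hK => /addrI; exact: C0inj.
have -> : 10 = #|ps S| by rewrite /ps cards_draws cS.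
rewrite -(card_in_imset injF); apply: eq_card => b; rewrite inE.
apply/andP/imsetP => [[bS /cards1P[P eP]]|[P pP ->]].
  have : P \in [set P in ps S | sm P == sm S + f b]%R by rewrite eP set11.
  by rewrite inE hsum => /andP[pP /eqP <-]; exists P.
split; first exact: C0out.
rewrite eqn_leq C0le1 /=; apply/card_gt0P; exists P.
by rewrite inE pP /= hsum.
Qed.
End C0.

Section C1.
Variable S : {set T}.
Hypotheses (cS : #|S| = 5) (dS : h (sm S) \in S).
Let d := h (sm S).
Let B0 := S :\ d.
Let fd : f d = sm S. Proof. by rewrite /d hK. Qed.
Let cB0 : #|B0| = 4. Proof. by rewrite /B0 cardsDs ?sub1set // cS cards1. Qed.
Let sB0 : sm B0 = 0%R. Proof. by rewrite /B0 smD ?sub1set // sm1 fd char2. Qed.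
Let dB0 : d \notin B0. Proof. by rewrite /B0 !inE eqxx. Qed.
Let B0S : B0 \subset S. Proof. exact: subsetDl. Qed.

Lemma C1red b : b \notin S ->
  [set P in ps S | sm P == sm S + f b]%R = [set P in ps B0 | sm P == sm S + f b]%R.
Proof.
move=> bS; apply/setP => P; rewrite !inE.
case eP: (sm P == sm S + f b)%R; rewrite ?andbF ?andbT //.
apply/andP/andP => [[PS cP]|[PB cP]]; split => //; last exact: subset_trans B0S.
apply/subsetP => x xP; rewrite !inE (subsetP PS) // andbT.
apply: contraNneq bS => xd; move: xP; rewrite xd => dP.
have [u ud eP'] := pair_with (eqP cP) dP.
move: eP; rewrite eP' sm2 1?eq_sym // -fd => /eqP/addrI/finj ->.
by apply: (subsetP PS); rewrite eP' !inE eqxx orbT.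
Qed.

Lemma C1W P : P \in ps B0 -> #|[set Q in ps B0 | sm Q == sm P]| = 2.
Proof.
move=> pP; have PB := ps_sub pP; have cP := ps_card pP.
have cD : #|B0 :\: P| = 2 by rewrite cardsDs // cB0 cP.
have nP : P != B0 :\: P.
  apply: contraTneq isT => eP.
  have : P :&: P = set0.
    by rewrite {2}eP; apply/setP => x; rewrite !inE; case: (x \in P); rewrite ?andbF.
  by rewrite setIid => P0; move: cP; rewrite P0 cards0.
have c2 : #|[set P; B0 :\: P]| = 2 by rewrite cards2 nP.
rewrite -c2; apply: eq_card => Q; rewrite !inE.
apply/idP/idP.
  case/andP=> /andP[QB cQ] sQ; case: (eqVneq Q P) => [->|nQP]; first by [].
  have dj := pc_disj (eqP cQ) cP (eqP sQ) nQP.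
  have sub : Q \subset B0 :\: P by apply/subsetDP.
  have : Q == B0 :\: P by rewrite eqEcard sub cD (eqP cQ).
  by move->; rewrite orbT.
case/orP=> /eqP ->; first by rewrite PB cP !eqxx.
by rewrite subsetDl cD smD // sB0 add0r !eqxx.
Qed.

Let F P := h (sm S + sm P)%R.

Lemma C1out P : P \in ps B0 -> F P \notin S.
Proof.
move=> pP; apply/negP => sS.
set s := F P in sS; have fs : f s = (f d + sm P)%R by rewrite /s /F hK fd.
case: (eqVneq s d) => [sd|nsd].
  move: fs; rewrite sd -{1}(addr0 (f d)) => /addrI/esym.
  have [u [v [uv eP]]] := cards2P _ (introT eqP (ps_card pP)).
  by rewrite eP sm2 //; apply/eqP/f2neq.
have sB : s \in B0 by rewrite /B0 !inE nsd.
case sP: (s \in P).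
  have [v vs eP] := pair_with (ps_card pP) sP.
  move: fs; rewrite eP sm2 1?eq_sym // => /eq3/finj dv.
  by move: dB0; rewrite dv (subsetP (ps_sub pP)) // eP !inE eqxx orbT.
have sub : s |: P \subset B0 by rewrite subUset sub1set sB (ps_sub pP).
have c3 : #|B0| = #|s |: P| + 1 by rewrite cardsU1 sP (ps_card pP) cB0.
have [t tB e] := rest1 sub c3.
move: e; rewrite smU1 ?sP // fs sB0 -[(f d + sm P + sm P)%R]addrA char2 addr0.
move/esym/add0E/finj => td; move: tB; rewrite td !inE eqxx /= andbF.
by [].
Qed.

Lemma C1q b : b \notin S ->
  pc S (sm S + f b)%R = if b \in F @: ps B0 then 2 else 0.
Proof.
move=> bS; rewrite /pc C1red //.
case: imsetP => [[P pP ->]|nb].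
  rewrite -(C1W pP); apply: eq_card => Q; rewrite !inE /F hK addKE.
  by [].
apply: eq_card0 => Q; rewrite !inE; apply/negP => /andP[pQ eQ].
apply: nb; exists Q; first by rewrite inE.
by rewrite /F (eqP eQ) addKE fK.
Qed.

Lemma C1cnt : #|F @: ps B0| = 3.
Proof.
have : #|ps B0| = 6 by rewrite /ps cards_draws cB0.
rewrite -sum1_card (partition_big_imset F) /=.
rewrite (eq_bigr (fun _ => 2)) ?sum_nat_const.
  by move/eqP; rewrite -[6]/(3 * 2) eqn_mul2r /= => /eqP.
move=> j /imsetP[P pP ->].
rewrite sum1dep_card -(C1W pP); apply: eq_card => Q; rewrite !inE.
congr (_ && _); apply/eqP/eqP => [/(congr1 f)|e]; last by rewrite /F e.
by rewrite /F !hK => /addrI.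
Qed.
End C1.

Lemma card_split (A : {set T}) (p : pred T) :
  #|[set b in A | p b]| + #|[set b in A | ~~ p b]| = #|A|.
Proof.
rewrite -(cardsID [set b | p b] A); congr (_ + _); apply: eq_card => b;
by rewrite !inE // andbC.
Qed.

Definition cS (S : {set T}) k := #|[set b | (b \notin S) && (nb (b |: S) == k)]|.

Lemma cardCS (S : {set T}) : #|S| = 5 -> #|[set b | b \notin S]| = #|T| - 5.
Proof.
move=> cS5; rewrite -cS5 -(cardsC S) addKn; apply: eq_card => b; by rewrite !inE.
Qed.

Lemma S_e0 (S : {set T}) : #|S| = 5 -> h (sm S) \notin S ->
  [/\ cS S 1 = 10, cS S 0 + 10 = #|T| - 5 & cS S 3 = 0].
Proof.
move=> c5 nS.
have E k : cS S k = #|[set b | (b \notin S) && (pc S (sm S + f b)%R == k)]|.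
  by apply: eq_card => b; rewrite !inE; case bS: (b \in S); rewrite //= nbU1 ?bS // (negbTE nS).
have c1 : cS S 1 = 10 by rewrite E C0cnt.
split => //.
- rewrite -c1 -(cardCS c5) -(card_split [set b | b \notin S] (fun b => nb (b |: S) == 1)) addnC.
  congr (_ + _); first by apply: eq_card => b; rewrite !inE.
  apply: eq_card => b; rewrite !inE.
  case bS: (b \in S) => //=; rewrite nbU1 ?bS ?(negbTE nS) //.
  by have := C0le1 c5 nS b; case: (pc _ _) => [|[]].
- rewrite E; apply: eq_card0 => b; rewrite !inE.
  by have := C0le1 c5 nS b; case: (pc _ _) => [|[|[]]]; rewrite ?andbF.
Qed.

Lemma S_e1 (S : {set T}) : #|S| = 5 -> h (sm S) \in S ->
  [/\ cS S 3 = 3, cS S 1 + 3 = #|T| - 5 & cS S 0 = 0].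
Proof.
move=> c5 dS.
set I := (fun P => h (sm S + sm P)%R) @: ps (S :\ h (sm S)).
have Iout : forall b, b \in I -> b \notin S.
  by move=> b /imsetP[P pP ->]; apply: C1out.
have E k : cS S k = #|[set b | (b \notin S) &&
     ((1 + if b \in I then 2 else 0) == k)]|.
  apply: eq_card => b; rewrite !inE; case bS: (b \in S) => //=.
  by rewrite nbU1 ?bS // dS C1q ?bS.
have c3 : cS S 3 = 3.
  rewrite E; transitivity #|I|; last exact: C1cnt.
  apply: eq_card => b; rewrite inE.
  by case bI: (b \in I); rewrite ?andbT ?andbF // Iout.
split => //.
- rewrite -(cardCS c5) -c3 -(card_split [set b | b \notin S] (fun b => nb (b |: S) == 1)).
  congr (_ + _); first by apply: eq_card => b; rewrite !inE.
  apply: eq_card => b; rewrite !inE.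
  case bS: (b \in S) => //=; rewrite nbU1 ?bS // dS C1q ?bS //.
  by case: (b \in I).
- rewrite E; apply: eq_card0 => b; rewrite !inE.
  by case: (b \in I); rewrite andbF.
Qed.

Definition cnt (x : {set T}) a k := #|[set b | (b \notin x) && (nb (b |: (x :\ a)) == k)]|.

Lemma PA (x : {set T}) a k : a \in x ->
  cnt x a k + (nb x == k) = cS (x :\ a) k.
Proof.
move=> ax; rewrite /cS (cardsD1 a) addnC; congr (_ + _).
  by rewrite !inE eqxx /= setD1K.
apply: eq_card => b; rewrite !inE.
case: (eqVneq b a) => [->|ba] /=; first by rewrite ax.
by [].
Qed.

Lemma card5 (x : {set T}) a : #|x| = 6 -> a \in x -> #|x :\ a| = 5.
Proof. by move=> c6 ax; move: c6; rewrite (cardsD1 a) ax => -[]. Qed.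

Lemma nbx (x : {set T}) a : #|x| = 6 -> a \in x ->
  nb x = (h (sm (x :\ a)) \in x :\ a) + pc (x :\ a) (sm (x :\ a) + f a)%R.
Proof.
move=> c6 ax; rewrite -nbU1 ?setD1K ?card5 //; by rewrite !inE eqxx.
Qed.

Lemma Pa0 (x : {set T}) a : #|x| = 6 -> a \in x -> h (sm (x :\ a)) \notin x :\ a ->
  [/\ nb x <= 1, cnt x a 1 + (nb x == 1) = 10,
      cnt x a 0 + (nb x == 0) + 10 = #|T| - 5 & cnt x a 3 = 0].
Proof.
move=> c6 ax ne; have c5 := card5 c6 ax.
have [e1 e0 e3] := S_e0 c5 ne.
rewrite !PA // e1 e0; split => //.
  by rewrite (nbx c6 ax) (negbTE ne) C0le1.
by move: e3; rewrite -PA // => /eqP; rewrite addn_eq0 => /andP[/eqP].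
Qed.

Lemma Pa1 (x : {set T}) a : #|x| = 6 -> a \in x -> h (sm (x :\ a)) \in x :\ a ->
  [/\ (nb x == 1) || (nb x == 3), cnt x a 3 + (nb x == 3) = 3,
      cnt x a 1 + (nb x == 1) + 3 = #|T| - 5 & cnt x a 0 = 0].
Proof.
move=> c6 ax ne; have c5 := card5 c6 ax.
have [e3 e1 e0] := S_e1 c5 ne.
rewrite !PA // e3 e1; split => //.
  rewrite (nbx c6 ax) ne C1q //; first by case: ifP.
  by rewrite !inE eqxx.
by move: e0; rewrite -PA // => /eqP; rewrite addn_eq0 => /andP[/eqP].
Qed.

Definition ee (x : {set T}) a := h (sm (x :\ a)) \in x :\ a.

Lemma smD1 (x : {set T}) a : a \in x -> sm (x :\ a) = (sm x + f a)%R.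
Proof. by move=> ax; rewrite smD ?sub1set // sm1. Qed.

Lemma E1 (x : {set T}) : #|x| = 6 -> nb x = 1 -> #|[set a in x | ee x a]| = 2.
Proof.
move=> c6; rewrite nbE // /pc => /eqP/cards1P[P0 eP0].
have : P0 \in [set P in ps x | sm P == sm x] by rewrite eP0 set11.
rewrite inE => /andP[pP0 /eqP sP0].
rewrite -(ps_card pP0); apply: eq_card => a; rewrite !inE /ee.
apply/andP/idP => [[ax]|aP].
  rewrite smD1 // => cx; set c := h _ in cx.
  have fc : f c = (sm x + f a)%R by rewrite /c hK.
  move: cx; rewrite !inE => /andP[ca cx].
  have : [set a; c] \in [set P in ps x | sm P == sm x].
    have ac : a != c by rewrite eq_sym.
    rewrite !inE cards2 ac sm2 // fc addrC -addrA char2 addr0 eqxx.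
    rewrite !andbT; apply/subsetP => z; rewrite !inE => /orP[]/eqP->//.
  by rewrite eP0 inE => /eqP <-; rewrite !inE eqxx.
have ax : a \in x by apply: (subsetP (ps_sub pP0)).
split => //; rewrite smD1 //.
have [c ca eP] := pair_with (ps_card pP0) aP.
move: sP0; rewrite eP sm2 1?eq_sym // => e.
have -> : h (sm x + f a)%R = c by rewrite -e addrC addKE fK.
rewrite !inE ca (subsetP (ps_sub pP0)) //.
by rewrite eP !inE eqxx orbT.
Qed.

Lemma sum_split (x : {set T}) (e : pred T) (F : T -> nat) c1 c0 :
  (forall a, a \in x -> F a = if e a then c1 else c0) ->
  \sum_(a in x) F a = #|[set a in x | e a]| * c1 + #|[set a in x | ~~ e a]| * c0.
Proof.
move=> HF; rewrite (bigID e) /=; congr (_ + _).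
  rewrite -sum_nat_cond_const; apply: eq_big => a; first by rewrite ?inE.
  by case/andP=> ax ea; rewrite HF // ea.
rewrite -sum_nat_cond_const; apply: eq_big => a; first by rewrite ?inE.
by case/andP=> ax ea; rewrite HF // (negbTE ea).
Qed.

Definition Nv (x : {set T}) k := \sum_(a in x) cnt x a k.

Lemma Vcases (x : {set T}) : #|x| = 6 -> [|| nb x == 0, nb x == 1 | nb x == 3].
Proof.
move=> c6; have : 0 < #|x| by rewrite c6.
case/card_gt0P => a ax.
case: (boolP (ee x a)) => e.
  by have [/orP[]->] := Pa1 c6 ax e; rewrite ?orbT.
have [] := Pa0 c6 ax e; case: (nb x) => [|[]] //.
Qed.

Lemma V0 (x : {set T}) : #|x| = 6 -> nb x = 0 ->
  [/\ Nv x 0 = 6 * (#|T| - 16), Nv x 1 = 60 & Nv x 3 = 0].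
Proof.
move=> c6 n0.
have ne : forall a, a \in x -> ~~ ee x a.
  move=> a ax; apply/negP => e; have [] := Pa1 c6 ax e.
  by rewrite n0.
rewrite /Nv; split.
- rewrite (eq_bigr (fun _ => #|T| - 16)) ?sum_nat_const ?c6 //.
  move=> a ax; have [_ _ ] := Pa0 c6 ax (ne a ax); rewrite n0 /= => ? _; lia.
- rewrite (eq_bigr (fun _ => 10)) ?sum_nat_const ?c6 //.
  move=> a ax; have [_ ] := Pa0 c6 ax (ne a ax); rewrite n0 /= => ? _ _; lia.
- rewrite (eq_bigr (fun _ => 0)) ?sum_nat_const ?c6 //.
  by move=> a ax; have [] := Pa0 c6 ax (ne a ax).
Qed.

Lemma V3 (x : {set T}) : #|x| = 6 -> nb x = 3 ->
  [/\ Nv x 0 = 0, Nv x 1 = 6 * (#|T| - 8) & Nv x 3 = 12].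
Proof.
move=> c6 n3.
have ne : forall a, a \in x -> ee x a.
  move=> a ax; apply/negPn/negP => e; have [] := Pa0 c6 ax e.
  by rewrite n3.
rewrite /Nv; split.
- rewrite (eq_bigr (fun _ => 0)) ?sum_nat_const ?c6 //.
  by move=> a ax; have [] := Pa1 c6 ax (ne a ax).
- rewrite (eq_bigr (fun _ => #|T| - 8)) ?sum_nat_const ?c6 //.
  move=> a ax; have [_ _ ] := Pa1 c6 ax (ne a ax); rewrite n3 /= => ? _; lia.
- rewrite (eq_bigr (fun _ => 2)) ?sum_nat_const ?c6 //.
  move=> a ax; have [_ ] := Pa1 c6 ax (ne a ax); rewrite n3 /= => ? _ _; lia.
Qed.

Lemma V1 (x : {set T}) : #|x| = 6 -> nb x = 1 -> 16 <= #|T| ->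
  [/\ Nv x 0 = 4 * (#|T| - 15), Nv x 1 = 2 * (#|T| - 9) + 36 & Nv x 3 = 6].
Proof.
move=> c6 n1 n16.
have cE := E1 c6 n1.
have cN : #|[set a in x | ~~ ee x a]| = 4.
  have := card_split x (ee x); rewrite cE c6; lia.
rewrite /Nv; split.
- rewrite (sum_split (e := ee x) (c1 := 0) (c0 := #|T| - 15)) ?cE ?cN; first lia.
  move=> a ax; case: ifP => e.
    by have [] := Pa1 c6 ax e.
  have [_ _ ] := Pa0 c6 ax (negbT e); rewrite n1 /= => ? _; lia.
- rewrite (sum_split (e := ee x) (c1 := #|T| - 9) (c0 := 9)) ?cE ?cN; first lia.
  move=> a ax; case: ifP => e.
    have [_ _ ] := Pa1 c6 ax e; rewrite n1 /= => ? _; lia.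
  have [_ ] := Pa0 c6 ax (negbT e); rewrite n1 /= => ? _ _; lia.
- rewrite (sum_split (e := ee x) (c1 := 3) (c0 := 0)) ?cE ?cN; first lia.
  move=> a ax; case: ifP => e.
    have [_ ] := Pa1 c6 ax e; rewrite n1 /= => ? _ _; lia.
  by have [] := Pa0 c6 ax (negbT e).
Qed.
End Core.

Section John.
Variable T : finType.
Definition JV := {x : {set T} | #|x| == 6}.

Lemma john_count (x : JV) (Q : pred {set T}) :
  #|[set w : JV | Q (val w) && (#|val x :&: val w| == 5)]| =
  \sum_(a in val x) #|[set b | (b \notin val x) && Q (b |: (val x :\ a))]|.
Proof.
set X := val x.
have cX : #|X| = 6 by apply/eqP; exact: (valP x).
pose phi (p : T * T) := p.2 |: (X :\ p.1).
set D := [set p : T * T | [&& p.1 \in X, p.2 \notin X & Q (phi p)]].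
have -> : \sum_(a in X) #|[set b | (b \notin X) && Q (b |: (X :\ a))]| = #|D|.
  under eq_bigr => a _ do rewrite -sum1dep_card.
  by rewrite pair_big_dep sum1dep_card.
have injphi : {in D &, injective phi}.
  move=> [a b] [a' b']; rewrite !inE /phi /= => /and3P[aX bX _] /and3P[a'X b'X _] e.
  have bb : b = b'.
    have : b \in b' |: (X :\ a') by rewrite -e setU11.
    by rewrite !inE (negbTE bX) andbF orbF => /eqP.
  subst b'; congr pair; apply/eqP/negPn/negP => aa.
  have a'a : a' != a by rewrite eq_sym.
  have : a' \in b |: (X :\ a) by rewrite !inE a'a a'X orbT.
  rewrite e !inE eqxx /= orbF => /eqP ab.
  by move: bX; rewrite -ab a'X.
rewrite -(card_in_imset injphi) -(card_imset _ val_inj).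
apply: eq_card => Y; apply/imsetP/imsetP.
- case=> w; rewrite inE => /andP[QY cI] ->.
  have cY : #|val w| = 6 by apply/eqP; exact: (valP w).
  have : #|X :\: val w| == 1 by rewrite cardsD (eqP cI) cX.
  case/cards1P => a ea.
  have : #|val w :\: X| == 1 by rewrite cardsD setIC (eqP cI) cY.
  case/cards1P => b eb.
  have aX : a \in X by have := set11 a; rewrite -ea inE => /andP[].
  have aw : a \notin val w by have := set11 a; rewrite -ea inE => /andP[].
  have bX : b \notin X by have := set11 b; rewrite -eb inE => /andP[].
  have bw : b \in val w by have := set11 b; rewrite -eb inE => /andP[].
  have eY : val w = phi (a, b).
    apply/setP => z; rewrite /phi /= !inE.
    case: (eqVneq z b) => [->|zb] /=; first by rewrite bw.
    case: (eqVneq z a) => [->|za] /=; first by rewrite (negbTE aw).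
    case zX: (z \in X).
      apply/negbNE/negP => zw.
      have : z \in X :\: val w by rewrite inE zX zw.
      by rewrite ea inE (negbTE za).
    apply/negbTE/negP => zw.
    have : z \in val w :\: X by rewrite inE zX zw.
    by rewrite eb inE (negbTE zb).
  by exists (a, b); rewrite // inE /= aX bX -eY QY.
- case=> [[a b]]; rewrite inE /= => /and3P[aX bX QY] ->.
  have c5 : #|X :\ a| = 5 by move: cX; rewrite (cardsD1 a) aX => -[].
  have cP : #|phi (a, b)| == 6.
    by rewrite /phi cardsU1 !inE (negbTE bX) andbF /= c5.
  exists (exist (fun S : {set T} => #|S| == 6) (phi (a, b)) cP) => //; rewrite inE /= QY /=.
  have -> : X :&: phi (a, b) = X :\ a.
    apply/setP => z; rewrite /phi !inE.
    rewrite /=; case: (eqVneq z b) => [->|]; rewrite ?(negbTE bX) //=; first by rewrite andbF.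
    by case: (z \in X); rewrite ?andbT ?andbF.
  by rewrite c5.
Qed.
End John.

Lemma oddmod x m k : k < m -> odd (x %/ 2 ^ k) = odd ((x %% 2 ^ m) %/ 2 ^ k).
Proof.
move=> km; rewrite {1}(divn_eq x (2 ^ m)).
have -> : 2 ^ m = 2 ^ (m - k) * 2 ^ k by rewrite -expnD subnK // ltnW.
rewrite mulnA divnMDl ?expn_gt0 // oddD oddM oddX.
have -> : (m - k == 0) = false by apply/negbTE; rewrite subn_eq0 -ltnNge.
by rewrite andbF.
Qed.

Lemma bits_eq m x y : x < 2 ^ m -> y < 2 ^ m ->
  (forall k, k < m -> odd (x %/ 2 ^ k) = odd (y %/ 2 ^ k)) -> x = y.
Proof.
elim: m x y => [|m IH] x y.
  by rewrite expn0 !ltnS !leqn0 => /eqP-> /eqP->.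
move=> xm ym e.
rewrite (divn_eq x 2) (divn_eq y 2) !modn2.
have e0 := e 0 isT; rewrite !expn0 !divn1 in e0; rewrite e0.
congr (_ * _ + _); apply: IH.
- by rewrite ltn_divLR // -expnSr.
- by rewrite ltn_divLR // -expnSr.
move=> k km; have := e k.+1 km.
by rewrite expnS !divnMA.
Qed.

Section Inst.
Variable m : nat.
Local Notation n := (2 ^ m).
Definition GV := {ffun 'I_m -> 'Z_2}.
Definition fI (i : 'I_n) : GV := [ffun k : 'I_m => (odd ((i + 1) %/ 2 ^ k) : nat)%:R]%R.

Lemma Z2_nat (b : nat) : (b%:R : 'Z_2)%R = (odd b : nat)%:R%R.
Proof. by rewrite -(Zp_nat_mod (isT : 1 < 2)) modn2. Qed.

Lemma Z2_inj (b c : bool) : ((b : nat)%:R : 'Z_2)%R = (c : nat)%:R%R -> b = c.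
Proof. by case: b; case: c => // /eqP. Qed.

Lemma char2G (g : GV) : (g + g = 0)%R.
Proof.
apply/ffunP => k; rewrite !ffunE.
by case: (g k) => [[|[|]]] //= ?; apply/val_inj.
Qed.

Lemma finjI : injective fI.
Proof.
move=> i j /ffunP e.
have ev : (i + 1) %% n = (j + 1) %% n.
  apply: (@bits_eq m); rewrite ?ltn_mod ?expn_gt0 //.
  move=> k km; have := e (Ordinal km); rewrite !ffunE => /Z2_inj.
  by rewrite -!oddmod.
apply/val_inj; move: ev => /eqP; rewrite eqn_modDr !modn_small //.
by move/eqP.
Qed.
End Inst.

Lemma sum_bool (T : finType) (B : {set T}) (b : pred T) :
  \sum_(i in B) (b i : nat) = #|[set i in B | b i]|.
Proof.
rewrite -sum1dep_card big_mkcondr /=; apply: eq_bigr => i _.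
by case: (b i).
Qed.

Section Inst2.
Variable m : nat.

Local Notation n := (2 ^ m).


Lemma syn_key (B : {set 'I_n}) k : (sm (fI (m:=m)) B) k =
  ((odd #|[set i in B | (i < n - 1) && odd ((i + 1) %/ 2 ^ k)]| : nat)%:R)%R.
Proof.
rewrite /sm sum_ffunE.
under eq_bigr => i _ do rewrite ffunE.
rewrite -natr_sum sum_bool Z2_nat; congr ((odd _ : nat)%:R)%R.
apply: eq_card => i; rewrite !inE.
case: (i \in B) => //=; apply/idP/andP => [o|[]//]; split => //.
case: (ltnP i (n - 1)) => // ge.
have ei : i + 1 = n by have := ltn_ord i; lia.
by move: o; rewrite (@oddmod _ m) ?ltn_ord // ei modnn div0n.
Qed.

Lemma syn_eq (B : {set 'I_n}) : hamming_syndrome_zero B = (sm (fI (m:=m)) B == 0%R).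
Proof.
apply/forallP/eqP => [H|H k].
  apply/ffunP => k; rewrite syn_key ffunE.
  by move: (H k); case: odd.
have := congr1 (fun g : GV m => g k) H; rewrite syn_key ffunE.
by case: odd => // /(@Z2_inj true false).
Qed.

Lemma par_ok (B : {set 'I_n}) : #|B| = 4 -> parity_bit_ok B.
Proof.
move=> c4; rewrite /parity_bit_ok.
have := card_split B (fun i : 'I_n => i < n - 1); rewrite c4.
case: existsP => [[j /andP[jB /eqP jv]]|nj].
  have -> : #|[set b in B | ~~ (b < n - 1)]| = 1.
    apply/eqP/cards1P; exists j; apply/setP => i; rewrite !inE.
    apply/andP/eqP => [[iB ge]|->]; last by rewrite jB jv ltnn.
    by apply/val_inj; have := ltn_ord i; rewrite /= jv; lia.
  by move=> e; rewrite -(addnK 1 #|_|) e.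
have -> : #|[set b in B | ~~ (b < n - 1)]| = 0.
  apply: eq_card0 => i; rewrite !inE; apply/negP => /andP[iB ge].
  apply: nj; exists i; rewrite iB /=; have := ltn_ord i; lia.
by rewrite addn0 => ->.
Qed.

Lemma SQS_blk (B : {set 'I_n}) : (B \in hamming_SQS m) = blk (fI (m:=m)) B.
Proof.
rewrite inE /blk /ext_hamming_codeword syn_eq.
case: (eqVneq #|B| 4) => //= c4.
by rewrite par_ok // andbT.
Qed.
End Inst2.

Section Main.
Variable m : nat.
Hypothesis hm : 4 <= m.
Local Notation n := (2 ^ m).
Variable h : GV m -> 'I_n.
Hypotheses (fK : cancel (@fI m) h) (hK : cancel h (@fI m)).
Let c2 := @char2G m.
Local Notation V := (johnson_vertex n 6).
Local Notation J := (johnson_adj n 6).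

Lemma n16 : 16 <= n.
Proof. by rewrite -[16]/(2 ^ 4) leq_exp2l. Qed.

Lemma cardT : #|'I_n| = n. Proof. exact: card_ord. Qed.

Lemma nblocksE (X : {set 'I_n}) : nblocks X = nb (@fI m) X.
Proof.
rewrite /nblocks /nb; apply: eq_card => B; rewrite !in_set -SQS_blk.
by rewrite /hamming_SQS in_set.
Qed.

Lemma cv (x : V) : #|val x| = 6. Proof. exact/eqP/(valP x). Qed.

Definition K k := [set y : V | nblocks (val y) == k].

Lemma nbrsK (x : V) k : nbrs_in J x (K k) = Nv (@fI m) (val x) k.
Proof.
rewrite /nbrs_in /Nv /cnt -(john_count x (fun Y => nb (@fI m) Y == k)); apply: eq_card => w.
by rewrite !inE nblocksE.
Qed.

Lemma Jsym (x y : V) : J x y = J y x.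
Proof. by rewrite /johnson_adj setIC. Qed.

Lemma kinds (x : V) : [|| x \in K 0, x \in K 1 | x \in K 3].
Proof. by rewrite !inE nblocksE; apply: Vcases fK hK c2 _ (cv x). Qed.

Lemma tab0 (x : V) : x \in K 0 ->
  [/\ nbrs_in J x (K 0) = 6 * (n - 16), nbrs_in J x (K 1) = 60 & nbrs_in J x (K 3) = 0].
Proof.
rewrite !nbrsK inE nblocksE => /eqP e.
by have := V0 fK hK c2 (cv x) e; rewrite cardT.
Qed.

Lemma tab1 (x : V) : x \in K 1 ->
  [/\ nbrs_in J x (K 0) = 4 * (n - 15), nbrs_in J x (K 1) = 2 * (n - 9) + 36
    & nbrs_in J x (K 3) = 6].
Proof.
rewrite !nbrsK inE nblocksE => /eqP e.
by have := V1 fK hK c2 (cv x) e; rewrite cardT => /(_ n16).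
Qed.

Lemma tab3 (x : V) : x \in K 3 ->
  [/\ nbrs_in J x (K 0) = 0, nbrs_in J x (K 1) = 6 * (n - 8) & nbrs_in J x (K 3) = 12].
Proof.
rewrite !nbrsK inE nblocksE => /eqP e.
by have := V3 fK hK c2 (cv x) e; rewrite cardT.
Qed.

Lemma nbr_ex (x : V) A : 0 < nbrs_in J x A -> exists2 y, y \in A & J y x.
Proof.
by case/card_gt0P => y; rewrite inE => /andP[yA xy]; exists y; rewrite // Jsym.
Qed.

Lemma nbr_no (x y : V) A : nbrs_in J x A = 0 -> y \in A -> ~~ J x y.
Proof.
move=> e yA; apply/negP => xy.
by move: e => /eqP; rewrite cards_eq0 => /eqP/setP/(_ y); rewrite !inE yA xy.
Qed.

Lemma K01 (x : V) : x \in K 0 -> x \in K 1 -> False.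
Proof. by rewrite !inE => /eqP->. Qed.
Lemma K03 (x : V) : x \in K 0 -> x \in K 3 -> False.
Proof. by rewrite !inE => /eqP->. Qed.
Lemma K13 (x : V) : x \in K 1 -> x \in K 3 -> False.
Proof. by rewrite !inE => /eqP->. Qed.

Lemma reach1_sub (w : V) : w \in reach J (K 0) 1 -> (w \in K 0) || (w \in K 1).
Proof.
rewrite /= inE => /existsP[v /andP[v0 vw]].
case/or3P: (kinds w) => [->|->|w3] //; rewrite ?orbT //.
have [_ _ e] := tab0 v0.
by move: (nbr_no e w3); rewrite vw.
Qed.

Lemma K1_reach1 (w : V) : w \in K 1 -> w \in reach J (K 0) 1.
Proof.
move=> w1; have [e _ _] := tab1 w1.
have [|y y0 yw] := nbr_ex (A := K 0) (x := w); first by rewrite e; have := n16; lia.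
by rewrite /= inE; apply/existsP; exists y; rewrite y0.
Qed.

Lemma K3_reach2 (w : V) : w \in K 3 -> w \in reach J (K 0) 2.
Proof.
move=> w3; have [_ e _] := tab3 w3.
have [|y y1 yw] := nbr_ex (A := K 1) (x := w); first by rewrite e; have := n16; lia.
by rewrite /= inE; apply/existsP; exists y; rewrite K1_reach1.
Qed.

Lemma layer0 : layer J (K 0) 0 = K 0.
Proof. by rewrite /layer big_ord0 setD0. Qed.

Lemma layer1 : layer J (K 0) 1 = K 1.
Proof.
rewrite /layer big_ord1 /=; apply/setP => w; rewrite inE.
apply/andP/idP => [[w0 /reach1_sub /orP[]//]|w1]; first by rewrite (negbTE w0).
split; last exact: K1_reach1.
by apply/negP => w0; apply: K01 w0 w1.
Qed.

Lemma layer2 : layer J (K 0) 2 = K 3.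
Proof.
rewrite /layer big_ord_recr big_ord1 /=; apply/setP => w; rewrite in_setD in_setU.
apply/andP/idP => [[]|w3].
  rewrite negb_or => /andP[w0 w1] _.
  case/or3P: (kinds w) => [w0'|w1'|//]; first by rewrite w0' in w0.
  by rewrite K1_reach1 in w1.
split; last exact: K3_reach2.
rewrite negb_or; apply/andP; split; apply/negP.
  by move=> w0; apply: K03 w0 w3.
by case/reach1_sub/orP => [w0|w1]; [apply: K03 w0 w3|apply: K13 w1 w3].
Qed.

Lemma layer_big i : 2 < i -> layer J (K 0) i = set0.
Proof.
move=> i2; apply/setP => w; rewrite /layer !inE; apply/negbTE.
rewrite negb_and negbK; apply/orP; left.
apply/bigcupP.
case/or3P: (kinds w) => wK.
- by exists (Ordinal (ltn_trans (isT : 0 < 2) i2)).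
- by exists (Ordinal (ltn_trans (isT : 1 < 2) i2)) => //; apply: K1_reach1.
- by exists (Ordinal i2) => //; apply: K3_reach2.
Qed.

Lemma nbrs0 (x : V) : nbrs_in J x set0 = 0.
Proof. by apply: eq_card0 => w; rewrite !inE. Qed.

Lemma exV : exists v : V, true.
Proof.
have : 0 < #|[set A : {set 'I_n} | #|A| == 6]|.
  by rewrite card_draws card_ord bin_gt0; have := n16; lia.
case/card_gt0P => A; rewrite inE => cA.
by exists (exist (fun S : {set 'I_n} => #|S| == 6) A cA).
Qed.

Lemma exK1_K0 (u : V) : u \in K 1 -> exists v : V, v \in K 0.
Proof.
move=> u1; have [e _ _] := tab1 u1.
have [|y y0 _] := nbr_ex (A := K 0) (x := u); first by rewrite e; have := n16; lia.
by exists y.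
Qed.

Lemma exK0 : exists v : V, v \in K 0.
Proof.
have [x _] := exV.
case/or3P: (kinds x) => xK; first by exists x.
  exact: exK1_K0 xK.
have [_ e _] := tab3 xK.
have [|y y1 _] := nbr_ex (A := K 1) (x := x); first by rewrite e; have := n16; lia.
exact: exK1_K0 y1.
Qed.

Lemma exK3 : exists v : V, v \in K 3.
Proof.
have [v v0] := exK0.
have [_ e _] := tab0 v0.
have [|u u1 _] := nbr_ex (A := K 1) (x := v); first by rewrite e.
have [_ _ e'] := tab1 u1.
have [|w w3 _] := nbr_ex (A := K 3) (x := u); first by rewrite e'.
by exists w.
Qed.
End Main.

Theorem theorem5p1 (m : nat) (hm : 4 <= m) :
  let J := johnson_adj (2 ^ m) 6 in
  let C : {set johnson_vertex (2 ^ m) 6} :=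
    [set x | nblocks (val x) == 0] in
  completely_regular J C /\
  covering_radius J C 2 /\
  layer J C 0 = C /\
  layer J C 1 = [set x | nblocks (val x) == 1] /\
  layer J C 2 = [set x | nblocks (val x) == 3] /\
  (forall x y, x \in layer J C 0 -> y \in layer J C 2 -> ~~ J x y) /\
  (forall x, x \in layer J C 1 -> nbrs_in J x (layer J C 2) = 6).
Proof.
move=> J C.
have [h fK hK] : bijective (@fI m).
  apply: inj_card_bij (@finjI m) _.
  by rewrite card_ffun !card_ord.
have eC : C = K m 0 by [].
have L0 := layer0 m; have L1 := layer1 hm fK hK.
have L2 := layer2 hm fK hK; have LB := layer_big hm fK hK.
rewrite /J eC L0 L1 L2.
split; last split; last split; last split; last split; last split.
- split; first by have [v v0] := exK0 hm fK hK; apply/set0Pn; exists v.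
  pose n := 2 ^ m.
  exists (fun i => nth 0 [:: 0; 4 * (n - 15); 6 * (n - 8)] i).
  exists (fun i => nth 0 [:: 6 * (n - 16); 2 * (n - 9) + 36; 12] i).
  exists (fun i => nth 0 [:: 60; 6; 0] i).
  case=> [|[|[|i]]] v /=.
  + rewrite L0 L1 nbrs0 => v0; have [-> -> _] := tab0 fK hK v0; by [].
  + rewrite L0 L1 L2 => v1; have [-> -> ->] := tab1 hm fK hK v1; by [].
  + rewrite L1 L2 (LB 3) // nbrs0 => v3; have [_ -> ->] := tab3 fK hK v3; by [].
  + by rewrite (LB i.+3) // inE.
- split; last exact: LB.
  rewrite L2; by have [v v3] := exK3 hm fK hK; apply/set0Pn; exists v.
- by [].
- by [].
- by [].
- move=> x y x0 y3; have [_ _ e] := tab0 fK hK x0.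
  exact: nbr_no e y3.
- by move=> x x1; have [_ _ ->] := tab1 hm fK hK x1.
Qed.
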